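(* Let $G$ be a torsion-free group, $\mathbb{F}$ a field, $\alpha$ a zero divisor in $\mathbb{F}[G]$ with $|supp(\alpha)|=4$ and $|S_\alpha|=12$, and $\beta$ a non-zero element of $\mathbb{F}[G]$ with $\alpha\beta=0$. Let $B=supp(\alpha)$, $C=supp(\beta)$. If $s\in\Delta^i$ and $s'\in\Delta^j$ with $s\ne s'$ and $i,j\in\{2,3,4\}$, then $|\mathcal{V}(s)\cap\mathcal{V}(s')|\le1$.
   Context: $supp(\gamma)=\{x\in G:\gamma_x\ne0\}$; $S_\alpha=\{h^{-1}h':h\ne h',\ h,h'\in supp(\alpha)\}$. $BC=\{bc:b\in B,c\in C\}$. For $s\in BC$, $R(s)=\{(b,c)\in B\times C: bc=s\}$ and $r(s)=|R(s)|$; $\Delta^i=\{s\in BC: r(s)=i\}$; $\mathcal{V}(s)=\{g\in C:(sg^{-1},g)\in R(s)\}$. *)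

(* Defs.v *)
From HB Require Import structures.
From mathcomp Require Import all_boot all_order all_algebra.
From mathcomp Require Import finmap.
Set Implicit Arguments. Unset Strict Implicit. Unset Printing Implicit Defensive.
Import GRing.Theory.
Local Open Scope fset_scope.

Definition is_group (G : Type) (mul : G -> G -> G) (one : G) (inv : G -> G) : Prop :=
  [/\ (forall x y z, mul x (mul y z) = mul (mul x y) z),
      (forall x, mul one x = x), (forall x, mul x one = x),
      (forall x, mul (inv x) x = one) & (forall x, mul x (inv x) = one)].

Definition gpow (G : Type) (mul : G -> G -> G) (one : G) (g : G) (n : nat) : G :=
  iter n (mul g) one.

Definition torsion_free (G : Type) (mul : G -> G -> G) (one : G) : Prop :=
  forall g n, (0 < n)%N -> gpow mul one g n = one -> g = one.

(* Elements of the group ring F[G]: finitely supported functions G -> F. *)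
Definition group_ring (G : choiceType) (F : fieldType) :=
  {fsfun G -> F with 0%R}.

Definition supp (G : choiceType) (F : fieldType) (a : group_ring G F) : {fset G} :=
  finsupp a.

Definition gr_mul (G : choiceType) (F : fieldType) (mul : G -> G -> G) (inv : G -> G)
  (a b : group_ring G F) (x : G) : F :=
  (\sum_(h <- supp a) a h * b (mul (inv h) x))%R.

Definition S_set (G : choiceType) (F : fieldType) (mul : G -> G -> G) (inv : G -> G)
  (a : group_ring G F) : {fset G} :=
  [fset mul (inv h) h' | h in supp a, h' in supp a & h != h'].

Definition prod_set (G : choiceType) (mul : G -> G -> G) (B C : {fset G}) : {fset G} :=
  [fset mul b c | b in B, c in C].

Definition R_set (G : choiceType) (mul : G -> G -> G) (B C : {fset G}) (s : G)
  : {fset G * G} :=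
  [fset p in B `*` C | mul p.1 p.2 == s].

Definition r_num (G : choiceType) (mul : G -> G -> G) (B C : {fset G}) (s : G) : nat :=
  #|` R_set mul B C s|.

Definition Delta (G : choiceType) (mul : G -> G -> G) (B C : {fset G}) (i : nat)
  : {fset G} :=
  [fset s in prod_set mul B C | r_num mul B C s == i].

Definition V_set (G : choiceType) (mul : G -> G -> G) (inv : G -> G)
  (B C : {fset G}) (s : G) : {fset G} :=
  [fset g in C | (mul s (inv g), g) \in R_set mul B C s].

(* Main.v *)
Require Import Defs.
From HB Require Import structures.
From mathcomp Require Import all_boot all_order all_algebra.
From mathcomp Require Import finmap.
From mathcomp Require Import zify.
Local Open Scope fset_scope.

Section Grp.
Context {G : Type} {mul : G -> G -> G} {one : G} {inv : G -> G}.
Hypothesis hG : is_group mul one inv.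

Lemma g_assoc x y z : mul x (mul y z) = mul (mul x y) z.
Proof. by case: hG. Qed.
Lemma g_1l x : mul one x = x. Proof. by case: hG. Qed.
Lemma g_1r x : mul x one = x. Proof. by case: hG. Qed.
Lemma g_Vl x : mul (inv x) x = one. Proof. by case: hG. Qed.
Lemma g_Vr x : mul x (inv x) = one. Proof. by case: hG. Qed.

Lemma g_invu a b : mul a b = one -> b = inv a.
Proof.
move=> h; by rewrite -[b]g_1l -(g_Vl a) -g_assoc h g_1r.
Qed.
Lemma g_invM x y : inv (mul x y) = mul (inv y) (inv x).
Proof.
symmetry; apply: g_invu.
by rewrite -g_assoc [mul y _]g_assoc g_Vr g_1l g_Vr.
Qed.
Lemma g_invK x : inv (inv x) = x.
Proof. by symmetry; apply: g_invu; rewrite g_Vl. Qed.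
Lemma g_mulIr x y z : mul y x = mul z x -> y = z.
Proof.
move=> h; by rewrite -[y]g_1r -(g_Vr x) g_assoc h -g_assoc g_Vr g_1r.
Qed.
Lemma g_invI x y : inv x = inv y -> x = y.
Proof. by move=> h; rewrite -[x]g_invK h g_invK. Qed.
End Grp.

Lemma pairs12 (T : eqType) (a b c d h h' : T) :
  h \in [:: a; b; c; d] -> h' \in [:: a; b; c; d] -> h != h' ->
  (h, h') \in [:: (a,b); (a,c); (a,d); (b,a); (b,c); (b,d);
                 (c,a); (c,b); (c,d); (d,a); (d,b); (d,c)].
Proof.
rewrite !in_cons !in_nil !orbF => /or4P[]/eqP-> /or4P[]/eqP->; rewrite ?eqxx // => _;
by rewrite ?orbT.
Qed.

Theorem mainTheorem17 (G : choiceType) (mul : G -> G -> G) (one : G) (inv : G -> G)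
  (F : fieldType) (alpha beta : group_ring G F) :
  is_group mul one inv ->
  torsion_free mul one ->
  #|` supp alpha| = 4%N ->
  #|` S_set mul inv alpha| = 12%N ->
  (exists x : G, beta x != 0%R) ->
  (forall x, gr_mul mul inv alpha beta x = 0%R) ->
  forall (s s' : G) (i j : nat),
    i \in [:: 2; 3; 4]%N -> j \in [:: 2; 3; 4]%N ->
    s \in Delta mul (supp alpha) (supp beta) i ->
    s' \in Delta mul (supp alpha) (supp beta) j ->
    s != s' ->
    (#|` V_set mul inv (supp alpha) (supp beta) s
         `&` V_set mul inv (supp alpha) (supp beta) s'| <= 1)%N.
Proof.
move=> hG _ hA hS _ _ s s' i j _ _ _ _ ss'.
set X := _ `&` _.
rewrite leqNgt; apply/negP => hX.
have /fset0Pn [g1 g1X] : X != fset0 by rewrite -cardfs_gt0 (ltn_trans _ hX).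
have : (0 < #|` X `\ g1|)%N.
  by move: hX; rewrite (cardfsD1 g1) g1X.
rewrite cardfs_gt0 => /fset0Pn [g2]; rewrite in_fsetD1 => /andP [g21 g2X].
have memV : forall g t, g \in V_set mul inv (supp alpha) (supp beta) t ->
    mul t (inv g) \in supp alpha.
  move=> g t; rewrite /V_set /R_set !inE /= => /andP [_ /andP [/andP [h _] _]].
  exact: h.
move: g1X g2X => /fsetIP [/memV h11 /memV h12] /fsetIP [/memV h21 /memV h22].
set b1 := mul s (inv g1) in h11 *.
set b1' := mul s' (inv g1) in h12 *.
set b2 := mul s (inv g2) in h21 *.
set b2' := mul s' (inv g2) in h22 *.
pose f (p : G * G) := mul (inv p.1) p.2.
have fE : forall t, f (mul t (inv g1), mul t (inv g2)) = mul g1 (inv g2).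
  move=> t; rewrite /f /= (g_invM hG) (g_invK hG) -(g_assoc hG).
  by rewrite [mul (inv t) _](g_assoc hG) (g_Vl hG) (g_1l hG).
have ne1 : b1 != b1'.
  apply/negP => /eqP /(g_mulIr hG) /eqP; by rewrite (negbTE ss').
have ne2 : b1 != b2.
  apply/negP => /eqP h; move: g21; rewrite eq_sym => /negP; apply.
  apply/eqP/(g_invI hG); move: h; rewrite /b1 /b2 => h.
  by rewrite -[inv g1](g_1l hG) -(g_Vl hG s) -(g_assoc hG) h (g_assoc hG) (g_Vl hG) (g_1l hG).
have ne2' : b1' != b2'.
  apply/negP => /eqP h; move: g21; rewrite eq_sym => /negP; apply.
  apply/eqP/(g_invI hG); move: h; rewrite /b1' /b2' => h.
  by rewrite -[inv g1](g_1l hG) -(g_Vl hG s') -(g_assoc hG) h (g_assoc hG) (g_Vl hG) (g_1l hG).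
have feq : f (b1, b2) = f (b1', b2') by rewrite /b1 /b2 /b1' /b2' !fE.
have p12 : (b1, b2) != (b1', b2').
  by apply/negP => /eqP [] /eqP; rewrite (negbTE ne1).
have sub : forall x, x \in S_set mul inv alpha ->
   exists h h', [/\ h \in (supp alpha : seq G), h' \in (supp alpha : seq G), h != h' & x = mul (inv h) h'].
  move=> x /imfset2P [h hA0 [h' h'A ->]]; exists h, h'; move: hA0 h'A; rewrite !inE.
  by move=> hA1 /andP [h'A nh]; split.
have k11 : b1 \in (supp alpha : seq G) := h11.
have k12 : b1' \in (supp alpha : seq G) := h12.
have k21 : b2 \in (supp alpha : seq G) := h21.
have k22 : b2' \in (supp alpha : seq G) := h22.
move: hA k11 k12 k21 k22 hS sub; clear h11 h12 h21 h22.
move: (S_set mul inv alpha) => S.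
case: (supp alpha : seq G) => [|a [|b [|c [|d [|? ?]]]]] //= _.
move=> h11 h12 h21 h22 hS sub.
set Q := [:: (a,b); (a,c); (a,d); (b,a); (b,c); (b,d);
                 (c,a); (c,b); (c,d); (d,a); (d,b); (d,c)].
have Sle : S `<=` [fset x in map f (filter (predC1 (b1, b2)) Q)].
  apply/fsubsetP => x /sub [h [h' [hh hh' nh ->]]].
  rewrite inE; apply/mapP.
  case: (eqVneq (h, h') (b1, b2)) => e.
    exists (b1', b2'); last by rewrite -feq -e.
    by rewrite mem_filter /= eq_sym p12 pairs12.
  by exists (h, h') => //; rewrite mem_filter /= e pairs12.
have := fsubset_leq_card Sle; rewrite hS card_fseq.
move=> /leq_trans /(_ (size_undup _)); rewrite size_map size_filter.
have : (0 < count (pred1 (b1, b2)) Q)%N.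
  by rewrite -has_count has_pred1 pairs12.
have e : (count (pred1 (b1, b2)) Q + count (predC1 (b1, b2)) Q = size Q)%N :=
  count_predC (pred1 (b1, b2)) Q.
move: e; rewrite [size Q]/=.
move: (count (pred1 _) _) (count (predC1 _) _) => m n e m0 h.
move: m0 h; rewrite -e; clear. move=> m0 h. lia.
Qed.
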